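(* There are absolute constants $c,C>0$ such that for every $n$ and every connected simple undirected graph $G_0$ on $n$ nodes that has exactly $k\ge 1$ fewer edges than the complete graph on $n$ nodes, the two-hop walk process started from $G_0$ satisfies $$\Pr\big[G_{\lfloor c\,n\ln k\rfloor}\text{ is complete}\big]\le C e^{-k^{1/4}},$$ i.e., with probability at least $1-O(e^{-k^{1/4}})$ it takes $\Omega(n\log k)$ rounds to reach the complete graph.
   Context: Two-hop walk process (undirected): $G_0$ is a connected simple undirected graph on an $n$-node vertex set $V$. Given $G_t$, in round $t$ every node $x$ independently picks a neighbor $v$ of $x$ in $G_t$ uniformly at random, then a neighbor $w$ of $v$ in $G_t$ uniformly at random, and the edge $\{x,w\}$ is added (nothing happens if $w=x$ or the edge already exists); $G_{t+1}$ is $G_t$ together with all edges added in round $t$. Edges are never removed. *)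

(* Defs.v *)
From mathcomp Require Import all_boot.
From Stdlib Require Import Reals.

Set Implicit Arguments.
Unset Strict Implicit.
Unset Printing Implicit Defensive.

Definition graph (n : nat) := {set {set 'I_n}}.

Definition simple_graph n (G : graph n) : Prop :=
  forall e, e \in G -> #|e| = 2.

Definition adj n (G : graph n) : rel 'I_n :=
  fun x y => (x != y) && ([set x; y] \in G).

Definition connected n (G : graph n) : Prop :=
  forall x y : 'I_n, connect (adj G) x y.

Definition num_edges n (G : graph n) : nat := #|G|.

Definition complete n (G : graph n) : bool :=
  [forall x : 'I_n, forall y : 'I_n, (x != y) ==> adj G x y].

Definition deg n (G : graph n) (x : 'I_n) : nat := #|[set y | adj G x y]|.

(* A choice profile for one round: node x picks (f x).1 = v, then (f x).2 = w. *)
Definition profile n := {ffun 'I_n -> 'I_n * 'I_n}.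

(* Probability of a profile in G: product over x of
   [v ~ x] [w ~ v] / (deg x * deg v)   (uniform choices, independent). *)
Definition weight n (G : graph n) (f : profile n) : R :=
  \big[Rmult/R1]_(x : 'I_n)
     (if adj G x (f x).1 && adj G (f x).1 (f x).2
      then (/ (INR (deg G x) * INR (deg G (f x).1)))%R
      else R0).

Definition step n (G : graph n) (f : profile n) : graph n :=
  G :|: [set [set x; (f x).2] | x in [set x : 'I_n | (f x).2 != x]].

(* prob_complete t G = Pr[G_t is complete] for the two-hop walk process with G_0 = G. *)
Fixpoint prob_complete n (t : nat) (G : graph n) : R :=
  match t with
  | 0 => if complete G then R1 else R0
  | t'.+1 => \big[Rplus/R0]_(f : profile n) (weight G f * prob_complete t' (step G f))%R
  end.

Definition nat_floor (x : R) : nat := Z.to_nat (Int_part x).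

(* Main.v *)
Require Import Defs.
From HB Require Import structures.
From mathcomp Require Import all_boot.
From Stdlib Require Import Reals Lra Lia.
From Stdlib Require ZArith.

Set Implicit Arguments.
Unset Strict Implicit.
Unset Printing Implicit Defensive.

Lemma RplusA : associative Rplus. Proof. move=> *; ring. Qed.
Lemma RmultA : associative Rmult. Proof. move=> *; ring. Qed.
Lemma RplusC : commutative Rplus. Proof. move=> *; ring. Qed.
Lemma RmultC : commutative Rmult. Proof. move=> *; ring. Qed.
Lemma Rplus0 : left_id R0 Rplus. Proof. move=> *; ring. Qed.
Lemma Rmult1 : left_id R1 Rmult. Proof. move=> *; ring. Qed.
Lemma Rmul0l : left_zero R0 Rmult. Proof. move=> *; ring. Qed.
Lemma Rmul0r : right_zero R0 Rmult. Proof. move=> *; ring. Qed.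
Lemma RmulDl : left_distributive Rmult Rplus. Proof. move=> *; ring. Qed.
Lemma RmulDr : right_distributive Rmult Rplus. Proof. move=> *; ring. Qed.
HB.instance Definition _ := Monoid.isComLaw.Build R R0 Rplus RplusA RplusC Rplus0.
HB.instance Definition _ := Monoid.isComLaw.Build R R1 Rmult RmultA RmultC Rmult1.
HB.instance Definition _ := Monoid.isMulLaw.Build R R0 Rmult Rmul0l Rmul0r.
HB.instance Definition _ := Monoid.isAddLaw.Build R Rmult Rplus RmulDl RmulDr.

Section S.
Variable I : finType.
Lemma sumR_le (F G : I -> R) : (forall i, F i <= G i)%R ->
  (\big[Rplus/R0]_i F i <= \big[Rplus/R0]_i G i)%R.
Proof. move=> H; apply: (big_ind2 (fun a b => a <= b)%R) => //; [lra|]. move=> *; lra. Qed.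
Lemma sumR_ge0 (F : I -> R) : (forall i, 0 <= F i)%R -> (0 <= \big[Rplus/R0]_i F i)%R.
Proof. move=> H; apply: (big_ind (fun a => 0 <= a)%R) => //; [lra|]. move=> *; lra. Qed.
Lemma prodR_le (F G : I -> R) : (forall i, 0 <= F i <= G i)%R ->
  (0 <= \big[Rmult/R1]_i F i <= \big[Rmult/R1]_i G i)%R.
Proof. move=> H; apply: (big_ind2 (fun a b => 0 <= a <= b)%R) => //; [lra|].
move=> x1 x2 y1 y2 [? ?] [? ?]; split; [nra|]. apply Rmult_le_compat; lra. Qed.
Lemma sumR_split (F G : I -> R) :
  \big[Rplus/R0]_i (F i + G i)%R = (\big[Rplus/R0]_i F i + \big[Rplus/R0]_i G i)%R.
Proof. exact: big_split. Qed.
Lemma sumR_scale (a : R) (F : I -> R) :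
  \big[Rplus/R0]_i (a * F i)%R = (a * \big[Rplus/R0]_i F i)%R.
Proof. by rewrite big_distrr. Qed.
Lemma exp_sum (F : I -> R) : exp (\big[Rplus/R0]_i F i) = \big[Rmult/R1]_i exp (F i).
Proof. apply: (big_morph exp) => //; [exact: exp_plus | exact: exp_0]. Qed.
Lemma INR_sum (F : I -> nat) : INR (\sum_i F i) = \big[Rplus/R0]_i INR (F i).
Proof. apply: (big_morph INR) => //. move=> x y; exact: plus_INR. Qed.
End S.

Definition miss n (G : graph n) (x y : 'I_n) : bool := (x != y) && ~~ adj G x y.
Definition mis n (G : graph n) x : nat := \sum_y miss G x y.
Definition Sm n (G : graph n) : nat := \sum_x mis G x.
Definition Bv n (G : graph n) (x : 'I_n) (p : 'I_n * 'I_n) : bool :=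
  (p.2 != x) && ~~ adj G x p.2.

Lemma adj_sym n (G : graph n) x y : adj G x y = adj G y x.
Proof. by rewrite /adj eq_sym setUC. Qed.

Lemma adj_neq n (G : graph n) x y : adj G x y -> x != y.
Proof. by case/andP. Qed.

Lemma deg_sum n (G : graph n) x : deg G x = \sum_y (adj G x y : nat).
Proof.
rewrite /deg -sum1_card big_mkcond /=; apply: eq_bigr => y _.
by rewrite inE; case: (adj G x y).
Qed.

Lemma sum_eq1 n (w : 'I_n) : \sum_b ((w == b) : nat) = 1.
Proof.
rewrite (bigD1 w) //= eqxx big1 //= => b; rewrite eq_sym => /negbTE ->. done.
Qed.

Lemma deg_mis n (G : graph n) x : deg G x + mis G x = n.-1.
Proof.
rewrite deg_sum /mis -big_split /=.
have -> : n.-1 = \sum_y ((x != y) : nat).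
  rewrite -[in LHS](card_ord n) -(cardC1 x) -sum1_card big_mkcond /=.
  apply: eq_bigr => y _; rewrite !inE eq_sym; by case: (y == x).
apply: eq_bigr => y _; rewrite /miss.
case H: (adj G x y); last by rewrite andbT.
by rewrite (adj_neq H).
Qed.

Lemma complete_S n (G : graph n) : complete G -> Sm G = 0.
Proof.
move=> /forallP H; rewrite /Sm big1 // => x _; rewrite /mis big1 // => y _.
rewrite /miss; case E: (x != y) => //=.
by move: (H x) => /forallP /(_ y) /implyP /(_ E) ->.
Qed.

Lemma set2_inj n (a b x w : 'I_n) : a != b -> [set a; b] = [set x; w] ->
  (a == x) && (b == w) || (a == w) && (b == x).
Proof.
move=> ab E.
have ha : a \in [set x; w] by rewrite -E !inE eqxx.
have hb : b \in [set x; w] by rewrite -E !inE eqxx orbT.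
move: ha hb ab; rewrite !inE => /orP[/eqP ->|/eqP ->] /orP[/eqP ->|/eqP ->];
  by rewrite ?eqxx ?orbT.
Qed.

Lemma miss_step n (G : graph n) (f : profile n) a b :
  miss G a b <= miss (step G f) a b + (Bv G a (f a) && ((f a).2 == b))
                + (Bv G b (f b) && ((f b).2 == a)).
Proof.
rewrite /miss; case ab: (a != b) => //=.
case hab: (adj G a b) => //=.
case hs: (adj (step G f) a b) => //=.
move: hs; rewrite /adj /step ab !inE /=.
have -> : ([set a; b] \in G) = false by move: hab; rewrite /adj ab.
move=> /imsetP [x]; rewrite inE => hx E.
have := set2_inj ab E.
case/orP => /andP [/eqP ea /eqP eb]; subst.
- by rewrite /Bv eqxx eq_sym ab /= hab.
- have hab' : adj G x (f x).2 = false by rewrite adj_sym.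
  by rewrite /Bv eqxx hx hab' /= addn1.
Qed.

Lemma sum_andeq n (c : bool) (w : 'I_n) : \sum_b ((c && (w == b)) : nat) = c.
Proof. case: c => /=; [exact: sum_eq1 | by rewrite big1]. Qed.

Lemma step_S n (G : graph n) (f : profile n) :
  Sm G <= Sm (step G f) + 2 * \sum_x (Bv G x (f x) : nat).
Proof.
rewrite /Sm /mis.
apply: (@leq_trans (\sum_a \sum_b (miss (step G f) a b + (Bv G a (f a) && ((f a).2 == b))
                + (Bv G b (f b) && ((f b).2 == a))))).
  apply: leq_sum => a _; apply: leq_sum => b _; exact: miss_step.
rewrite mul2n -addnn.
under eq_bigr => a _ do rewrite big_split /= big_split /= sum_andeq.
rewrite big_split /= big_split /= addnA; apply: leq_add => //.
rewrite exchange_big /=.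
under eq_bigr => b _ do rewrite sum_andeq.
done.
Qed.

Definition P n (G : graph n) (x : 'I_n) (p : 'I_n * 'I_n) : R :=
  if adj G x p.1 && adj G p.1 p.2
  then (/ (INR (deg G x) * INR (deg G p.1)))%R else R0.

Lemma weightE n (G : graph n) f : weight G f = \big[Rmult/R1]_x P G x (f x).
Proof. by []. Qed.

Lemma Rinv_ge0 r : (0 <= r -> 0 <= / r)%R.
Proof.
move=> h; case: (Req_dec r 0) => [->|nz]; first by rewrite Rinv_0; lra.
apply: Rlt_le; apply: Rinv_0_lt_compat; lra.
Qed.

Lemma P_ge0 n (G : graph n) x p : (0 <= P G x p)%R.
Proof.
rewrite /P; case: ifP => _; last lra.
apply: Rinv_ge0; apply: Rmult_le_pos; apply: pos_INR.
Qed.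

Lemma sum_if (I : finType) (b : I -> bool) (c : R) :
  \big[Rplus/R0]_i (if b i then c else R0) = (INR (\sum_i (b i : nat)) * c)%R.
Proof.
rewrite INR_sum Rmult_comm -sumR_scale; apply: eq_bigr => i _.
case: (b i) => /=; lra.
Qed.

Lemma deg_pos n (G : graph n) x v : adj G x v -> (0 < deg G v)%N.
Proof.
move=> h; rewrite deg_sum (bigD1 x) //= adj_sym h. done.
Qed.

Lemma P_inner n (G : graph n) x v :
  \big[Rplus/R0]_w P G x (v, w) = if adj G x v then (/ INR (deg G x))%R else R0.
Proof.
rewrite /P /=; case hv: (adj G x v) => /=; last by rewrite big1.
rewrite sum_if -deg_sum.
have hd : INR (deg G v) <> 0%R by apply: not_0_INR; move: (deg_pos hv); case: (deg G v).
case: (Req_dec (INR (deg G x)) 0) => [->|hx]; first by rewrite Rmult_0_l !Rinv_0; lra.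
field; split; done.
Qed.

Lemma P_sum n (G : graph n) x : (\big[Rplus/R0]_p P G x p <= 1)%R.
Proof.
rewrite -(pair_bigA _ (fun v w => P G x (v, w))) /=.
under eq_bigr => v _ do rewrite P_inner.
rewrite sum_if -deg_sum.
case: (Req_dec (INR (deg G x)) 0) => [->|hx]; first lra.
rewrite Rinv_r //; lra.
Qed.

From mathcomp Require Import zify.

Definition q n (G : graph n) x : R :=
  \big[Rplus/R0]_p (if Bv G x p then P G x p else R0).

Lemma q_le1 n (G : graph n) x : (q G x <= 1)%R.
Proof.
apply: Rle_trans (P_sum G x); apply: sumR_le => p.
case: ifP => _; [lra | exact: P_ge0].
Qed.

Lemma q_ge0 n (G : graph n) x : (0 <= q G x)%R.
Proof. apply: sumR_ge0 => p; case: ifP => _; [exact: P_ge0 | lra]. Qed.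

Definition cv n (G : graph n) x v : nat :=
  \sum_w ((adj G v w && ((w != x) && ~~ adj G x w)) : nat).

Lemma q_inner n (G : graph n) x v :
  \big[Rplus/R0]_w (if Bv G x (v, w) then P G x (v, w) else R0) =
  if adj G x v then (INR (cv G x v) * / (INR (deg G x) * INR (deg G v)))%R else R0.
Proof.
rewrite /Bv /P /=; case hv: (adj G x v) => /=.
  rewrite /cv -sum_if; apply: eq_bigr => w _.
  by case: (adj G v w); case: ((w != x) && ~~ adj G x w).
by rewrite big1 // => w _; case: ifP.
Qed.

Lemma cv_mis n (G : graph n) x v : (cv G x v <= mis G x)%N.
Proof.
apply: leq_sum => w _; rewrite /miss eq_sym.
by case: (adj G v w); case: (w != x); case: (adj G x w).
Qed.

Lemma cv_deg n (G : graph n) x v : (cv G x v <= deg G v)%N.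
Proof.
rewrite deg_sum; apply: leq_sum => w _.
by case: (adj G v w); rewrite //= leq_b1.
Qed.

Lemma nat_key c mx mv dv D : (c <= mx)%N -> (c <= dv)%N -> dv + mv = D ->
  (c * D <= 2 * (mx + mv) * dv)%N.
Proof.
move=> h1 h2 h3; case: (leqP mv dv) => h4; nia.
Qed.

Lemma div_cross a b u v w : (0 < u -> 0 < v -> 0 < w -> a * w <= b * v ->
  a * / (u * v) <= b * / (w * u))%R.
Proof.
move=> hu hv hw h.
have -> : (a * / (u * v) = (a * w) * / (u * v * w))%R by field; lra.
have -> : (b * / (w * u) = (b * v) * / (u * v * w))%R by field; lra.
apply: Rmult_le_compat_r => //; apply: Rinv_ge0.
apply: Rmult_le_pos; [apply: Rmult_le_pos|]; lra.
Qed.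

Lemma sum_if2 (I : finType) (b : I -> bool) (F : I -> nat) (K : R) :
  \big[Rplus/R0]_i (if b i then INR (F i) * K else R0)%R =
  (INR (\sum_i (b i * F i)) * K)%R.
Proof.
rewrite INR_sum Rmult_comm -sumR_scale; apply: eq_bigr => i _.
case: (b i) => /=; rewrite ?mul1n ?mul0n /=; lra.
Qed.

Lemma nat_adj_sum n (G : graph n) x :
  (\sum_v (adj G x v * (mis G x + mis G v)) <= mis G x * deg G x + Sm G)%N.
Proof.
under eq_bigr => v _ do rewrite mulnDr.
rewrite big_split /= deg_sum big_distrr /=.
apply: leq_add; first by apply: leq_sum => v _; rewrite mulnC.
rewrite /Sm; apply: leq_sum => v _; case: (adj G x v); rewrite /= ?mul1n ?mul0n //.
Qed.

Lemma INR2 : INR 2 = 2%R.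
Proof. rewrite /=; lra. Qed.

Lemma q_bound n (G : graph n) x : (1 < n)%N ->
  (q G x * INR n.-1 * INR n.-1 <= 2 * INR (mis G x) * INR n.-1 + 4 * INR (Sm G))%R.
Proof.
move=> n1.
have hD := deg_mis G x.
set D := n.-1 in hD *; set dx := deg G x in hD *; set mx := mis G x in hD *.
have D1 : (1 <= D)%N by rewrite /D; clear -n1; case: n n1 => [|[|m]].
have hS := pos_INR (Sm G).
have hq := q_ge0 G x.
case: (ltnP (2 * dx) D) => hc.
  have h1 : (D * D <= 2 * mx * D)%N by nia.
  have h2 := le_INR _ _ (ssrnat.leP h1); rewrite !mult_INR INR2 in h2.
  have := q_le1 G x; have := pos_INR D; nra.
have dx1 : (1 <= dx)%N by nia.
have hdx : (0 < INR dx)%R by apply: lt_0_INR; apply/ssrnat.ltP.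
have hDp : (0 < INR D)%R by apply: lt_0_INR; apply/ssrnat.ltP.
have hle : (q G x <= INR (mx * dx + Sm G) * (2 * / (INR D * INR dx)))%R.
  rewrite /q -(pair_bigA _ (fun v w => if Bv G x (v, w) then P G x (v, w) else R0)) /=.
  under eq_bigr => v _ do rewrite q_inner.
  apply: (@Rle_trans _ (\big[Rplus/R0]_v (if adj G x v then INR (mx + mis G v) * (2 * / (INR D * INR dx)) else R0))%R).
    apply: sumR_le => v; case hv: (adj G x v); last lra.
    have dv1 := deg_pos hv.
    have hdv : (0 < INR (deg G v))%R by apply: lt_0_INR; apply/ssrnat.ltP.
    have hk := nat_key (cv_mis G x v) (cv_deg G x v) (deg_mis G v).
    have hk' := le_INR _ _ (ssrnat.leP hk); rewrite !mult_INR INR2 in hk'.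
    rewrite -Rmult_assoc.
    apply: div_cross => //.
    rewrite [(INR (mx + mis G v) * 2)%R]Rmult_comm; exact: hk'.
  rewrite sum_if2; apply: Rmult_le_compat_r.
    apply: Rmult_le_pos; [lra| apply: Rinv_ge0; nra].
  apply: le_INR; apply/ssrnat.leP; exact: nat_adj_sum.
have hD2 : (INR D <= 2 * INR dx)%R.
  have h3 : (D <= 2 * dx)%N by [].
  have := le_INR _ _ (ssrnat.leP h3); rewrite mult_INR INR2; lra.
rewrite plus_INR mult_INR in hle.
have hle2 : (q G x * (INR D * INR dx) <= 2 * (INR mx * INR dx + INR (Sm G)))%R.
  have -> : (2 * (INR mx * INR dx + INR (Sm G)) =
     (INR mx * INR dx + INR (Sm G)) * (2 * / (INR D * INR dx)) * (INR D * INR dx))%R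
    by field; lra.
  apply: Rmult_le_compat_r => //; nra.
nra.
Qed.

Lemma sum_const n (c : R) : \big[Rplus/R0]_(x : 'I_n) c = (INR n * c)%R.
Proof.
have := sum_if (fun _ : 'I_n => true) c.
have -> : \sum_(i < n) (true : nat) = n by rewrite sum_nat_const card_ord muln1.
by move=> <-.
Qed.

Lemma qsum n (G : graph n) : (1 < n)%N ->
  (\big[Rplus/R0]_x q G x * INR n.-1 <= 10 * INR (Sm G))%R.
Proof.
move=> n1.
have hDp : (0 < INR n.-1)%R by apply: lt_0_INR; apply/ssrnat.ltP; clear -n1; case: n n1 => [|[|m]].
have hn : (INR n <= 2 * INR n.-1)%R.
  have h3 : (n <= 2 * n.-1)%N by clear -n1; case: n n1 => [|[|m]] //=; nia.
  have := le_INR _ _ (ssrnat.leP h3); rewrite mult_INR INR2; lra.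
have h : (\big[Rplus/R0]_x q G x * INR n.-1 * INR n.-1 <=
          \big[Rplus/R0]_x (2 * INR (mis G x) * INR n.-1 + 4 * INR (Sm G)))%R.
  rewrite Rmult_assoc Rmult_comm -sumR_scale; apply: sumR_le => x.
  rewrite Rmult_comm -Rmult_assoc; exact: q_bound.
rewrite sumR_split sum_const in h.
have E : (\big[Rplus/R0]_x (2 * INR (mis G x) * INR n.-1) = 2 * INR n.-1 * INR (Sm G))%R.
  rewrite /Sm INR_sum -sumR_scale; apply: eq_bigr => x _; ring.
rewrite E in h.
have hS := pos_INR (Sm G).
have hq : (0 <= \big[Rplus/R0]_x q G x)%R by apply: sumR_ge0 => x; exact: q_ge0.
nra.
Qed.

Lemma exp_le x y : (x <= y -> exp x <= exp y)%R.
Proof. case=> [h|->]; [apply: Rlt_le; exact: exp_increasing | lra]. Qed.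

Definition gB n (G : graph n) (nu : R) x p : R := if Bv G x p then exp (2 * nu) else 1%R.

Lemma pointwise n (G : graph n) (f : profile n) (nu : R) : (0 <= nu)%R ->
  (exp (- nu * INR (Sm (step G f))) <=
   exp (- nu * INR (Sm G)) * \big[Rmult/R1]_x gB G nu x (f x))%R.
Proof.
move=> hnu.
have h := le_INR _ _ (ssrnat.leP (step_S G f)).
rewrite plus_INR mult_INR INR2 INR_sum in h.
have -> : (\big[Rmult/R1]_x gB G nu x (f x) =
          exp (\big[Rplus/R0]_x (2 * nu * INR (Bv G x (f x)))))%R.
  rewrite exp_sum; apply: eq_bigr => x _; rewrite /gB.
  case: (Bv G x (f x)) => /=; [f_equal; ring| rewrite Rmult_0_r exp_0 //].
rewrite -exp_plus; apply: exp_le.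
rewrite sumR_scale.
set T := \big[Rplus/R0]_i INR (Bv G i (f i)) in h *.
nra.
Qed.

Lemma weight_ge0 n (G : graph n) f : (0 <= weight G f)%R.
Proof.
rewrite weightE; apply: (big_ind (fun a => 0 <= a)%R); [lra| |move=> x _; exact: P_ge0].
move=> a b ha hb; nra.
Qed.

Lemma per_x n (G : graph n) nu x : (0 <= nu)%R ->
  (0 <= \big[Rplus/R0]_p (P G x p * gB G nu x p) <= exp ((exp (2 * nu) - 1) * q G x))%R.
Proof.
move=> hnu.
have hE : (1 <= exp (2 * nu))%R by have := exp_ineq1_le (2 * nu); lra.
have -> : (\big[Rplus/R0]_p (P G x p * gB G nu x p) =
          \big[Rplus/R0]_p P G x p + (exp (2 * nu) - 1) * q G x)%R.
  rewrite /q -sumR_scale -sumR_split; apply: eq_bigr => p _.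
  rewrite /gB; case: (Bv G x p); ring.
have := P_sum G x; have := q_ge0 G x.
have : (0 <= \big[Rplus/R0]_p P G x p)%R by apply: sumR_ge0 => p; exact: P_ge0.
have := exp_ineq1_le ((exp (2 * nu) - 1) * q G x).
move=> *; split; nra.
Qed.

Lemma step_bound n (G : graph n) (nu : R) : (0 <= nu)%R ->
  (\big[Rplus/R0]_(f : profile n) (weight G f * exp (- nu * INR (Sm (step G f)))) <=
   exp (- nu * INR (Sm G)) * exp ((exp (2 * nu) - 1) * \big[Rplus/R0]_x q G x))%R.
Proof.
move=> hnu.
apply: (@Rle_trans _ (\big[Rplus/R0]_(f : profile n) (exp (- nu * INR (Sm G)) *
            \big[Rmult/R1]_x (P G x (f x) * gB G nu x (f x))))%R).
  apply: sumR_le => f.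
  rewrite big_split /= -weightE.
  have := pointwise G f hnu; have := weight_ge0 G f.
  set a := exp _; set b := exp _; set c := \big[Rmult/R1]_(i < n) _; move=> *; nra.
rewrite sumR_scale; apply: Rmult_le_compat_l; first by apply: Rlt_le; apply: exp_pos.
rewrite -(@bigA_distr_bigA R R0 R1 Rmult Rplus _ _ (fun x p => (P G x p * gB G nu x p)%R)).
rewrite -sumR_scale exp_sum.
case: (@prodR_le _ (fun x => \big[Rplus/R0]_p (P G x p * gB G nu x p))%R
   (fun x => exp ((exp (2*nu) - 1) * q G x)) (fun x => per_x G x hnu)) => _ h.
exact: h.
Qed.

Lemma prob_le1 n t (G : graph n) : (prob_complete t G <= 1)%R.
Proof.
elim: t G => [|t IH] G /=; first by case: (complete G); lra.
apply: (@Rle_trans _ (\big[Rplus/R0]_(f : profile n) (weight G f * exp (- 0 * INR (Sm (step G f)))))%R).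
  apply: sumR_le => f; rewrite Ropp_0 Rmult_0_l exp_0.
  have := IH (step G f); have := weight_ge0 G f; nra.
apply: Rle_trans (step_bound G (Rle_refl 0)) _.
rewrite Rmult_0_r exp_0 Rminus_diag Rmult_0_l Ropp_0 Rmult_0_l exp_0; lra.
Qed.

Lemma exp_bound nu : (0 <= nu <= 1/2 -> exp (2 * nu) - 1 <= 6 * nu)%R.
Proof.
move=> hnu.
have h1 := exp_ineq1_le (- (2 * nu)).
have h2 : (exp (2 * nu) * exp (- (2 * nu)) = 1)%R by rewrite -exp_plus Rplus_opp_r exp_0.
have h3 : (exp (2 * nu) <= 3)%R.
  apply: Rle_trans exp_le_3; apply: exp_le; lra.
have h4 := exp_pos (2 * nu).
nra.
Qed.

Lemma prob_main n t (G : graph n) nu : (60 <= INR n.-1)%R -> (1 < n)%N ->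
  (0 <= nu <= 1/2)%R ->
  (prob_complete t G <= exp (- (nu * (1 - 60 / INR n.-1) ^ t) * INR (Sm G)))%R.
Proof.
move=> hD n1.
set rho := (1 - 60 / INR n.-1)%R.
have hr : (0 <= rho <= 1)%R.
  rewrite /rho; split; last first.
    have : (0 <= 60 / INR n.-1)%R by apply: Rmult_le_pos; [lra| apply: Rinv_ge0; lra].
    lra.
  have : (60 / INR n.-1 <= 1)%R.
    apply: (Rmult_le_reg_r (INR n.-1)); first lra.
    rewrite /Rdiv Rmult_assoc Rinv_l; lra.
  lra.
elim: t G nu => [|t IH] G nu hnu /=.
  case E: (complete G); last by apply: Rlt_le; apply: exp_pos.
  by rewrite (complete_S E) Rmult_0_r exp_0; lra.
have hrt : (0 <= rho ^ t <= 1)%R.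
  split; [apply: pow_le; lra|]; rewrite -(pow1 t); apply: pow_incr; lra.
set v := (nu * rho ^ t)%R.
have hv : (0 <= v <= 1/2)%R by rewrite /v; split; nra.
apply: (@Rle_trans _ (\big[Rplus/R0]_(f : profile n) (weight G f * exp (- v * INR (Sm (step G f)))))%R).
  apply: sumR_le => f.
  have := IH (step G f) nu hnu; have := weight_ge0 G f.
  rewrite /v; move=> *; apply: Rmult_le_compat_l => //.
apply: Rle_trans (step_bound G (proj1 hv)) _.
rewrite -exp_plus; apply: exp_le.
have hq := qsum G n1.
have hDp : (0 < INR n.-1)%R by lra.
have he := exp_bound hv.
have hS := pos_INR (Sm G).
have hqs : (0 <= \big[Rplus/R0]_x q G x)%R by apply: sumR_ge0 => x; exact: q_ge0.
set Q := \big[Rplus/R0]_x q G x in hq hqs *.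
have : ((exp (2 * v) - 1) * Q <= 60 * v * INR (Sm G) / INR n.-1)%R.
  apply: (Rmult_le_reg_r (INR n.-1)); first lra.
  have -> : (60 * v * INR (Sm G) / INR n.-1 * INR n.-1 = 60 * v * INR (Sm G))%R by field; lra.
  have he0 : (0 <= exp (2 * v) - 1)%R by have := exp_ineq1_le (2 * v); lra.
  nra.
have -> : (- (nu * (rho * rho ^ t)) * INR (Sm G) = - v * INR (Sm G) + 60 * v * INR (Sm G) / INR n.-1)%R.
  rewrite /v /rho; field; lra.
lra.
Qed.

Lemma nat_floor_le x : (0 <= x)%R -> (INR (nat_floor x) <= x)%R.
Proof.
move=> hx; rewrite /nat_floor.
have [h1 _] := base_Int_part x.
move: h1; case: (Int_part x) => [|p|p] h1 /=; try lra.
by rewrite INR_IZR_INZ Znat.positive_nat_Z.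
Qed.

Lemma exp_pow x t : (exp x ^ t = exp (INR t * x))%R.
Proof.
elim: t => [|t IH]; first by rewrite /= Rmult_0_l exp_0.
rewrite S_INR [in LHS]/pow -/pow IH -exp_plus; f_equal; ring.
Qed.

Lemma one_minus_ge x : (0 <= x <= 1/2 -> exp (- (2 * x)) <= 1 - x)%R.
Proof.
move=> hx.
have h1 := exp_ineq1_le (2 * x).
have h2 : (exp (2 * x) * exp (- (2 * x)) = 1)%R by rewrite -exp_plus Rplus_opp_r exp_0.
have h3 := exp_pos (- (2 * x)).
nra.
Qed.

Lemma bin2_double n : 2 * 'C(n, 2) = n * n.-1.
Proof.
elim: n => [|n IH] //.
rewrite binS bin1 mulnDr IH /=; case: n IH => [|n] IH //=; nia.
Qed.

Lemma pairs_le2 n (e : {set 'I_n}) :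
  \sum_x \sum_y (((x != y) && (e == [set x; y])) : nat) <= 2.
Proof.
case: (boolP [exists x, exists y, (x != y) && (e == [set x; y])]); last first.
  move=> /existsPn H; rewrite big1 // => x _; rewrite big1 // => y _.
  by move: (H x) => /existsPn /(_ y) /negbTE ->.
move=> /existsP [a] /existsP [b] /andP [ab /eqP Ee].
apply: (@leq_trans (\sum_x \sum_y (((a == x) && (b == y)) + ((b == x) && (a == y))))).
  apply: leq_sum => x _; apply: leq_sum => y _.
  case xy: (x != y) => //=; case E: (e == [set x; y]) => //=.
  move: E; rewrite Ee => /eqP E.
  have := set2_inj ab E.
  case/orP => /andP [/eqP -> /eqP ->]; by rewrite !eqxx //= ?addn1.
under eq_bigr => x _ do rewrite big_split /= sum_andeq sum_andeq.
rewrite big_split /=.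
by rewrite -(eq_bigr _ (fun x _ => erefl ((a == x) : nat))) sum_eq1 sum_eq1.
Qed.

Lemma deg_total n (G : graph n) : \sum_x deg G x <= 2 * #|G|.
Proof.
apply: (@leq_trans (\sum_x \sum_y \sum_(e in G) (((x != y) && (e == [set x; y])) : nat))).
  apply: leq_sum => x _; rewrite deg_sum; apply: leq_sum => y _.
  rewrite /adj; case: (x != y) => //=; case hin: ([set x; y] \in G) => //=.
  by rewrite (bigD1 [set x; y]) //= eqxx.
rewrite exchange_big /=.
under eq_bigr => x _ do rewrite exchange_big /=.
rewrite exchange_big /= -sum1_card big_distrr /=.
apply: leq_sum => e _; rewrite muln1 exchange_big; exact: pairs_le2.
Qed.

Lemma S_ge n (G : graph n) k : #|G| + k = 'C(n, 2) -> 2 * k <= Sm G.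
Proof.
move=> hk.
have h1 : \sum_x (deg G x + mis G x) = n * n.-1.
  under eq_bigr => x _ do rewrite deg_mis.
  by rewrite sum_nat_const card_ord.
rewrite big_split /= in h1.
have h2 := deg_total G.
have h3 := bin2_double n.
rewrite /Sm; move: h1 h2 h3 hk; set N := n * n.-1; set A := \sum_x deg G x.
set B := \sum_x mis G x; set C := 'C(n, 2); move=> *; lia.
Qed.

Theorem theorem13 :
  exists c C : R, (0 < c)%R /\ (0 < C)%R /\
  forall (n k : nat) (G0 : graph n),
    simple_graph G0 -> connected G0 -> 1 <= k ->
    num_edges G0 + k = 'C(n, 2) ->
    (prob_complete (nat_floor (c * INR n * ln (INR k))) G0
       <= C * exp (- Rpower (INR k) (1 / 4)))%R.
Proof.
exists (1/320)%R, (exp 20000).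
split; first lra. split; first exact: exp_pos.
move=> n k G0 _ _ k1 hk.
have hS := S_ge hk.
have h2 := bin2_double n.
have n1 : (1 < n)%N.
  case: n G0 hk hS h2 => [|[|m]] G0 hk hS h2 //=; move: hk; rewrite /num_edges /=; lia.
have hk0 : (1 <= INR k)%R by apply: (le_INR 1); apply/ssrnat.leP.
have hlnk : (0 <= ln (INR k))%R.
  rewrite -ln_1; case: (Rle_lt_or_eq_dec _ _ hk0) => h; last by rewrite h; lra.
  by apply: Rlt_le; apply: ln_increasing => //; lra.
have hRp : (Rpower (INR k) (1 / 4) <= INR k)%R.
  rewrite /Rpower -{2}(exp_ln (INR k)); last lra.
  apply: exp_le; nra.
set T := nat_floor _.
case: (ltnP n.-1 120) => hn.
  have hn' : (n <= 120)%N by move: hn; clear -n1 => hn; lia.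
  have hn'' : (n.-1 <= 120)%N by move: hn; clear -n1 => hn; lia.
  have r1 := le_INR _ _ (ssrnat.leP hn'); rewrite (INR_IZR_INZ 120) /= in r1.
  have r2 := le_INR _ _ (ssrnat.leP hn''); rewrite (INR_IZR_INZ 120) /= in r2.
  have hkC : (k <= 'C(n, 2))%N by rewrite -hk leq_addl.
  have r3 := le_INR _ _ (ssrnat.leP hkC).
  have r4 : (2 * INR 'C(n, 2) = INR n * INR n.-1)%R by have := f_equal INR h2; rewrite !mult_INR INR2.
  have hk3 : (INR k <= 20000)%R.
    have := pos_INR n; have := pos_INR n.-1; nra.
  apply: Rle_trans (prob_le1 T G0) _.
  rewrite -exp_plus.
  have : (exp 0 <= exp (20000 + - Rpower (INR k) (1 / 4)))%R by apply: exp_le; lra.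
  by rewrite exp_0.
have hD : (120 <= INR n.-1)%R.
  have := le_INR _ _ (ssrnat.leP hn). by rewrite (INR_IZR_INZ 120) /=.
have := prob_main T G0 (ltac:(lra) : (60 <= INR n.-1)%R) n1 (ltac:(lra) : (0 <= 1/2 <= 1/2)%R).
set rho := (1 - 60 / INR n.-1)%R => hp.
apply: Rle_trans hp _.
have hrho : (exp (- (2 * (60 / INR n.-1))) <= rho)%R.
  apply: one_minus_ge; split.
    apply: Rmult_le_pos; [lra| apply: Rinv_ge0; lra].
  apply: (Rmult_le_reg_r (INR n.-1)); first lra.
  rewrite /Rdiv Rmult_assoc Rinv_l; lra.
have hT : (INR T <= 1/320 * INR n * ln (INR k))%R.
  apply: nat_floor_le; apply: Rmult_le_pos => //; apply: Rmult_le_pos; [lra| apply: pos_INR].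
have hn2 : (INR n <= 2 * INR n.-1)%R.
  have h3 : (n <= 2 * n.-1)%N by clear -n1; case: n n1 => [|[|m]] //=; nia.
  have := le_INR _ _ (ssrnat.leP h3); rewrite mult_INR INR2; lra.
have hrT : (exp (- (3/4) * ln (INR k)) <= rho ^ T)%R.
  apply: Rle_trans (pow_incr _ _ T (conj (Rlt_le _ _ (exp_pos _)) hrho)).
  rewrite exp_pow; apply: exp_le.
  have hT2 : (INR T * (60 / INR n.-1) <= 3/8 * ln (INR k))%R.
    apply: (Rmult_le_reg_r (INR n.-1)); first lra.
    have -> : (INR T * (60 / INR n.-1) * INR n.-1 = 60 * INR T)%R by field; lra.
    nra.
  nra.
have hSR : (2 * INR k <= INR (Sm G0))%R.
  have := le_INR _ _ (ssrnat.leP hS); rewrite mult_INR INR2; lra.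
have hpow : (Rpower (INR k) (1 / 4) <= rho ^ T * INR k)%R.
  apply: (@Rle_trans _ (exp (- (3/4) * ln (INR k)) * INR k)%R).
    have e1 : INR k = exp (ln (INR k)) by rewrite exp_ln; lra.
    rewrite /Rpower [X in (_ <= _ * X)%R]e1 -exp_plus; apply: exp_le; lra.
  apply: Rmult_le_compat_r; lra.
have hrT0 : (0 <= rho ^ T)%R by apply: Rle_trans hrT; apply: Rlt_le; apply: exp_pos.
apply: (@Rle_trans _ (exp (- Rpower (INR k) (1 / 4)))).
  apply: exp_le; nra.
have := exp_pos (- Rpower (INR k) (1 / 4)); have := exp_ineq1_le 20000; nra.
Qed.
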